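(* Let $D$ be any distribution of $(X,A,Y)$ on $\mathcal{X}\times\{0,1\}\times\{0,1\}$ ($\mathcal{X}$ discrete), and let $\tilde D_t$ be obtained by applying the one-step bias process $t$ times, step $i$ with parameters $(\beta_{p,i},\beta_{n,i},\nu_i)$; let $(X,A,\tilde Y_t)$ denote a random point from $\tilde D_t$ and $c_i=\beta_{n,i}/\beta_{p,i}$. Let $\eta(x,a)=\Pr[Y=1\mid X=x,A=a]$ and $\tilde\eta_t(x,a)=\Pr[\tilde Y_t=1\mid X=x,A=a]$. Then $$\tilde\eta_t(x,0)=\frac{\eta(x,0)}{\displaystyle\sum_{i=1}^t\Big(\frac{1-c_i}{1-\nu_i}\prod_{j=i+1}^t\frac{c_j}{1-\nu_j}\Big)\eta(x,0)+\prod_{i=1}^t\frac{c_i}{1-\nu_i}},$$ where $\prod_{j=t+1}^t\frac{c_j}{1-\nu_j}=1$.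
   Context: One-step bias process with parameters $(\beta_p',\beta_n',\nu')$, $\beta_p',\beta_n',\nu'\in(0,1)$, applied to a distribution of $(X,A,Y)$: points with $A=1$ are kept unchanged; points with $A=0,Y=1$ survive independently with probability $\beta_p'$, points with $A=0,Y=0$ survive independently with probability $\beta_n'$; each surviving point with $A=0,Y=1$ keeps label $1$ with probability $1-\nu'$ and is flipped to $0$ with probability $\nu'$; the output is the distribution of surviving points. $\tilde D_t$ results from applying step $i$ to the output of step $i-1$, starting from $D$. *)

(* Defs.v *)
From HB Require Import structures.
From mathcomp Require Import all_boot all_order all_algebra.
From mathcomp Require Import all_classical all_reals all_analysis.
Set Implicit Arguments. Unset Strict Implicit. Unset Printing Implicit Defensive.
Import Order.TTheory GRing.Theory Num.Theory.
Local Open Scope classical_set_scope.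
Local Open Scope ring_scope.

(* A discrete distribution of (X,A,Y) on X x {0,1} x {0,1} (X countable),
   given by its probability mass function; A = true means A = 1, etc. *)
Definition mass (R : realType) (X : countType) := X * bool * bool -> R.

Definition is_distr (R : realType) (X : countType) (D : mass R X) : Prop :=
  (forall z, 0 <= D z) /\ (\esum_(z in [set: X * bool * bool]) (D z)%:E = 1)%E.

Definition bias_surv (R : realType) (X : countType) (bp bn nu : R) (D : mass R X)
  : mass R X := fun z =>
  match z with
  | (x, true, y) => D (x, true, y)
  | (x, false, true) => bp * (1 - nu) * D (x, false, true)
  | (x, false, false) => bn * D (x, false, false) + bp * nu * D (x, false, true)
  end.

Definition bias_step (R : realType) (X : countType) (bp bn nu : R) (D : mass R X)
  : mass R X := fun z =>
  bias_surv bp bn nu D z /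
    fine (\esum_(w in [set: X * bool * bool]) (bias_surv bp bn nu D w)%:E)%E.

Fixpoint bias_iter (R : realType) (X : countType) (bp bn nu : nat -> R)
  (D : mass R X) (t : nat) : mass R X :=
  match t with
  | 0 => D
  | t'.+1 => bias_step (bp t'.+1) (bn t'.+1) (nu t'.+1) (bias_iter bp bn nu D t')
  end.

Definition cond_eta (R : realType) (X : countType) (D : mass R X) (x : X) (a : bool)
  : R := D (x, a, true) / (D (x, a, true) + D (x, a, false)).

(* Main.v *)
Require Import Defs.
From HB Require Import structures.
From mathcomp Require Import all_boot all_order all_algebra.
From mathcomp Require Import all_classical all_reals all_analysis.
From mathcomp Require Import lra ring.
Import Order.TTheory GRing.Theory Num.Theory.
Local Open Scope ring_scope.
Local Open Scope classical_set_scope.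

Section S.
Context (R : realType) (T : choiceType).

Lemma esumZl (k : R) (a : T -> \bar R) : 0 <= k -> (forall z, 0 <= a z)%E ->
  (\esum_(z in [set: T]) (k%:E * a z) = k%:E * \esum_(z in [set: T]) a z)%E.
Proof.
move=> k0 a0; rewrite /esum -ereal_supZl //; last first.
  by apply/set0P; exists (\sum_(i \in set0) a i)%E; exists set0 => //; exact: fsets_set0.
congr ereal_sup; apply/seteqP; split => y /=.
  move=> [A fA <-]; exists (\sum_(i \in A) a i)%E; first by exists A.
  by rewrite ge0_mule_fsumr.
move=> [_ [A fA <-] <-]; exists A => //; by rewrite ge0_mule_fsumr.
Qed.
End S.

Definition flip {X : countType} (z : X * bool * bool) : X * bool * bool :=
  (z.1.1, z.1.2, ~~ z.2).

Lemma flip_bij (X : countType) : set_bij [set: X * bool * bool] [set: X * bool * bool] (@flip X).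
Proof.
split.
- by [].
- by move=> [[u v] w] [[u' v'] w'] _ _ [-> -> /negb_inj ->].
- move=> [[u v] w] _; exists (u, v, ~~ w) => //; by rewrite /flip /= negbK.
Qed.

Section Step.
Context (R : realType) (X : countType).
Local Open Scope ring_scope.

Definition finm (D : mass R X) :=
  (\esum_(z in [set: X * bool * bool]) (D z)%:E < +oo)%E.

Lemma surv_ge0 (bp bn nu : R) (D : mass R X) : 0 <= bp -> 0 <= bn -> 0 <= nu <= 1 ->
  (forall z, 0 <= D z) -> forall z, 0 <= bias_surv bp bn nu D z.
Proof.
move=> hp hn /andP[h1 h2] D0 [[u [|]] [|]] /=; rewrite ?D0 //.
- by rewrite !mulr_ge0 ?D0 ?subr_ge0.
- by rewrite addr_ge0 ?mulr_ge0 ?D0.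
Qed.

Lemma surv_le (bp bn nu : R) (D : mass R X) : 0 <= bp <= 1 -> 0 <= bn <= 1 -> 0 <= nu <= 1 ->
  (forall z, 0 <= D z) -> forall z, bias_surv bp bn nu D z <= D z + D (flip z).
Proof.
move=> /andP[p0 p1] /andP[n0 n1] /andP[v0 v1] D0 [[u [|]] [|]] /=;
  rewrite /flip /=.
- by rewrite lerDl D0.
- by rewrite lerDl D0.
- have := D0 (u, false, true); have := D0 (u, false, false) => h1 h2.
  have : bp * (1 - nu) <= 1 by nra.
  have : 0 <= bp * (1 - nu) by nra.
  nra.
- have := D0 (u, false, true); have := D0 (u, false, false) => h1 h2.
  have : bp * nu <= 1 by nra.
  have : 0 <= bp * nu by nra.
  nra.
Qed.

Lemma surv_fin (bp bn nu : R) (D : mass R X) : 0 <= bp <= 1 -> 0 <= bn <= 1 -> 0 <= nu <= 1 ->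
  (forall z, 0 <= D z) -> finm D -> finm (bias_surv bp bn nu D).
Proof.
move=> hp hn hv D0 fD; rewrite /finm.
apply: (le_lt_trans (le_esum (b := fun z => (D z)%:E + (D (flip z))%:E)%E _)).
  by move=> z _; rewrite lee_fin surv_le.
rewrite esumD; last 2 first.
- by move=> z _; rewrite lee_fin.
- by move=> z _; rewrite lee_fin.
rewrite -(@reindex_esum _ _ _ _ _ _ (fun z => (D z)%:E) (flip_bij X)).
by rewrite lte_add_pinfty.
Qed.


Lemma esum_pt (a : X * bool * bool -> R) z0 :
  ((a z0)%:E <= \esum_(z in [set: X * bool * bool]) (a z)%:E)%E.
Proof.
apply: esum_ge; exists [set z0]; first by split; [exact: finite_set1|].
by rewrite fsbig_set1.
Qed.

Lemma step_props (bp bn nu : R) (D : mass R X) x :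
  0 < bp < 1 -> 0 < bn < 1 -> 0 < nu < 1 -> (forall z, 0 <= D z) -> finm D ->
  0 < D (x, false, true) + D (x, false, false) ->
  [/\ (forall z, 0 <= bias_step bp bn nu D z), finm (bias_step bp bn nu D),
   0 < bias_step bp bn nu D (x, false, true) + bias_step bp bn nu D (x, false, false) &
   cond_eta (bias_step bp bn nu D) x false = cond_eta D x false /
     ((1 - bn / bp) / (1 - nu) * cond_eta D x false + (bn / bp) / (1 - nu))].
Proof.
move=> /andP[p0 p1] /andP[n0 n1] /andP[v0 v1] D0 fD hx.
have hp : 0 <= bp <= 1 by rewrite !ltW.
have hn : 0 <= bn <= 1 by rewrite !ltW.
have hv : 0 <= nu <= 1 by rewrite !ltW.
have S0 := @surv_ge0 bp bn nu D (ltW p0) (ltW n0) hv D0.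
have fS := @surv_fin bp bn nu D hp hn hv D0 fD.
set E := (\esum_(z in [set: X * bool * bool]) (bias_surv bp bn nu D z)%:E)%E.
have E0 : (0 <= E)%E by apply: esum_ge0 => z _; rewrite lee_fin.
have Efin : E \is a fin_num by rewrite ge0_fin_numE.
set N := fine E.
have EN : E = N%:E by rewrite fineK.
have d1 := D0 (x, false, true); have d0 := D0 (x, false, false).
have [z0 hz0] : exists z0, 0 < bias_surv bp bn nu D z0.
  have [h|h] := eqVneq (D (x, false, true)) 0.
    exists (x, false, false) => /=; rewrite h mulr0 addr0.
    apply: mulr_gt0 => //; rewrite h add0r in hx; exact: hx.
  exists (x, false, true) => /=; rewrite !mulr_gt0 ?subr_gt0 //.
  by rewrite lt_neqAle eq_sym h d1.
have N0 : 0 < N.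
  have := esum_pt (bias_surv bp bn nu D) z0; rewrite -/E EN lee_fin => h.
  exact: lt_le_trans hz0 h.
have stepE z : bias_step bp bn nu D z = bias_surv bp bn nu D z / N by [].
split.
- by move=> z; rewrite stepE divr_ge0 // ltW.
- rewrite /finm.
  under eq_esum do rewrite stepE mulrC EFinM.
  rewrite esumZl; [|by rewrite invr_ge0 ltW|by move=> z; rewrite lee_fin].
  by rewrite -/E EN -EFinM ltry.
- rewrite !stepE /= -mulrDl divr_gt0 //.
  have -> : bp * (1 - nu) * D (x, false, true) + (bn * D (x, false, false) + bp * nu * D (x, false, true))
     = bp * D (x, false, true) + bn * D (x, false, false) by ring.
  have [h|h] := eqVneq (D (x, false, true)) 0.
    rewrite h mulr0 add0r mulr_gt0 //; rewrite h add0r in hx; exact: hx.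
  have : 0 < D (x, false, true) by rewrite lt_neqAle eq_sym h d1.
  move=> h'; apply: ltr_wpDr; [by rewrite mulr_ge0 // ltW|exact: mulr_gt0].
- rewrite /cond_eta !stepE /=.
  set q1 := D (x, false, true) in hx d1 *; set q0 := D (x, false, false) in hx d0 *.
  have hq : 0 < bp * q1 + bn * q0.
    have [h|h] := eqVneq q1 0.
      rewrite h mulr0 add0r mulr_gt0 //; rewrite h add0r in hx; exact: hx.
    have : 0 < q1 by rewrite lt_neqAle eq_sym h d1.
    move=> h'; apply: ltr_wpDr; [by rewrite mulr_ge0 // ltW|exact: mulr_gt0].
  have hq0 : q1 + q0 != 0 by rewrite gt_eqF.
  have hN : N != 0 by rewrite gt_eqF.
  have hbp : bp != 0 by rewrite gt_eqF.
  have hnu : 1 - nu != 0 by rewrite subr_eq0 eq_sym lt_eqF.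
  have hq' : bp * q1 + bn * q0 != 0 by rewrite gt_eqF.
  have hden : (1 - bn / bp) / (1 - nu) * (q1 / (q1 + q0)) + bn / bp / (1 - nu)
      = (bp * q1 + bn * q0) / (bp * (1 - nu) * (q1 + q0))
    by field; rewrite ?hq0 ?hnu ?hbp ?hN ?hq'.
  rewrite hden.
  have hs : bp * (1 - nu) * q1 / N + (bn * q0 + bp * nu * q1) / N = (bp * q1 + bn * q0) / N
    by field; rewrite ?hq0 ?hnu ?hbp ?hN ?hq'.
  rewrite hs; field; by rewrite ?hq0 ?hnu ?hbp ?hN ?hq'.
Qed.

End Step.
Arguments finm {R X}.
Arguments step_props {R X bp bn nu D x}.

Local Close Scope classical_set_scope.

Lemma pos_den {R : realType} {S P e : R} : 1 <= S + P -> 0 < P -> 0 <= e <= 1 -> 0 < S * e + P.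
Proof.
move=> h1 h2 /andP[e0 e1].
have a1 : 0 <= (S + P - 1) * e by rewrite mulr_ge0 // subr_ge0.
have a2 : 0 <= P * (1 - e) by rewrite mulr_ge0 ?subr_ge0 // ltW.
have -> : S * e + P = (S + P - 1) * e + (e + P * (1 - e)) by ring.
have [->|en] := eqVneq e 0; first by rewrite subr0 mulr1 add0r mulr0 add0r.
have : 0 < e by rewrite lt_neqAle eq_sym en.
lra.
Qed.

Theorem proposition7p1 (R : realType) (X : countType) (D : mass R X)
  (bp bn nu : nat -> R) (t : nat) (x : X) :
  is_distr D ->
  (forall i, (1 <= i <= t)%N ->
     [/\ 0 < bp i < 1, 0 < bn i < 1 & 0 < nu i < 1]) ->
  0 < D (x, false, true) + D (x, false, false) ->
  let c := fun i => bn i / bp i in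
  cond_eta (bias_iter bp bn nu D t) x false =
  cond_eta D x false /
    ((\sum_(1 <= i < t.+1)
        ((1 - c i) / (1 - nu i) *
         \prod_(i.+1 <= j < t.+1) (c j / (1 - nu j)))) * cond_eta D x false
     + \prod_(1 <= i < t.+1) (c i / (1 - nu i))).
Proof.
move=> [D0 Dsum] hpar hx c; rewrite {}/c.
set e := cond_eta D x false.
have he : 0 <= e <= 1.
  have d1 := D0 (x, false, true); have d0 := D0 (x, false, false).
  rewrite /e /cond_eta divr_ge0 ?addr_ge0 //= ler_pdivrMr // mul1r lerDl //.
pose Sf k := \sum_(1 <= i < k.+1)
        ((1 - bn i / bp i) / (1 - nu i) *
         \prod_(i.+1 <= j < k.+1) (bn j / bp j / (1 - nu j))).
pose Pf k := \prod_(1 <= i < k.+1) (bn i / bp i / (1 - nu i)).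
suff key : forall k, (k <= t)%N ->
  [/\ (forall z, 0 <= bias_iter bp bn nu D k z), finm (bias_iter bp bn nu D k),
   0 < bias_iter bp bn nu D k (x, false, true) + bias_iter bp bn nu D k (x, false, false),
   cond_eta (bias_iter bp bn nu D k) x false = e / (Sf k * e + Pf k)
   & 1 <= Sf k + Pf k /\ 0 < Pf k].
  by case: (key t (leqnn t)).
elim=> [_|k IH hk].
  have hS : Sf 0%N = 0 by rewrite /Sf big_geq.
  have hP : Pf 0%N = 1 by rewrite /Pf big_geq.
  rewrite hS hP mul0r add0r divr1; split => //.
  by rewrite /finm Dsum ltry.
have [Dk0 fk hxk ek [SPk Pk]] := IH (ltnW hk).
have [hp hn hv] := hpar k.+1 hk.
have /andP[p0 p1] := hp; have /andP[n0 n1] := hn; have /andP[v0 v1] := hv.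
have -> : bias_iter bp bn nu D k.+1
   = bias_step (bp k.+1) (bn k.+1) (nu k.+1) (bias_iter bp bn nu D k) by [].
have [D'0 fD' hx' ek'] := step_props hp hn hv Dk0 fk hxk.
set a := (1 - bn k.+1 / bp k.+1) / (1 - nu k.+1).
set b := bn k.+1 / bp k.+1 / (1 - nu k.+1).
have hP : Pf k.+1 = Pf k * b by rewrite /Pf big_nat_recr.
have hS : Sf k.+1 = Sf k * b + a.
  rewrite /Sf big_nat_recr //= (@big_geq _ _ _ k.+2 k.+2) // mulr1; congr (_ + _).
  rewrite big_distrl /=; apply: eq_big_nat => i /andP[_ hi].
  by rewrite big_nat_recr //=; exact: mulrA.
have hbp : bp k.+1 != 0 by rewrite gt_eqF.
have hnu : 1 - nu k.+1 != 0 by rewrite subr_eq0 eq_sym lt_eqF.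
have SP' : 1 <= Sf k.+1 + Pf k.+1.
  have -> : Sf k.+1 + Pf k.+1 =
     (bn k.+1 / bp k.+1 * (Sf k + Pf k) + 1 - bn k.+1 / bp k.+1) / (1 - nu k.+1).
    by rewrite hS hP /a /b; field; rewrite ?hbp ?hnu.
  have c0 : 0 < bn k.+1 / bp k.+1 by rewrite divr_gt0.
  rewrite ler_pdivlMr ?subr_gt0 // mul1r.
  have : 0 <= bn k.+1 / bp k.+1 * (Sf k + Pf k - 1) by rewrite mulr_ge0 ?subr_ge0 // ltW.
  lra.
have P' : 0 < Pf k.+1 by rewrite hP mulr_gt0 // /b !divr_gt0 // subr_gt0.
split => //.
rewrite ek' ek.
have d0 := pos_den SPk Pk he.
have d1 := pos_den SP' P' he.
rewrite hS hP in d1 *.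
have hd0 : Sf k * e + Pf k != 0 by rewrite gt_eqF.
have hd1 : (Sf k * b + a) * e + Pf k * b != 0 by rewrite gt_eqF.
rewrite -/a -/b.
have -> : a * (e / (Sf k * e + Pf k)) + b = ((Sf k * b + a) * e + Pf k * b) / (Sf k * e + Pf k)
  by field; rewrite ?hd0.
field; by rewrite ?hd0 ?hd1.
Qed.
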